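(* Let $L$ be a split regular Hom-Lie color algebra with symmetric root system $\Lambda$. Then: (1) for every $\alpha\in\Lambda$, $L_{\Lambda_\alpha}=H_{\Lambda_\alpha}\oplus V_{\Lambda_\alpha}$ is an ideal of $L$; (2) if $L$ is simple, then every $\alpha\in\Lambda$ is connected to every $\beta\in\Lambda$, and $H=\sum_{\alpha\in\Lambda}[L_\alpha,L_{-\alpha}]$.
   Context: Let $\mathbb{K}$ be a field and $\Gamma$ an abelian group. A bi-character is $\varepsilon:\Gamma\times\Gamma\to\mathbb{K}\setminus\{0\}$ with $\varepsilon(a,b)\varepsilon(b,a)=1$, $\varepsilon(a,b+c)=\varepsilon(a,b)\varepsilon(a,c)$, $\varepsilon(a+b,c)=\varepsilon(a,c)\varepsilon(b,c)$. A Hom-Lie color algebra $(L,[\cdot,\cdot],\phi,\varepsilon)$ is a $\Gamma$-graded space $L=\bigoplus_gL_g$ with bilinear $[\cdot,\cdot]$, $[L_g,L_h]\subset L_{g+h}$, linear $\phi$ with $\phi(L_g)\subset L_g$, $\phi([x,y])=[\phi x,\phi y]$, such that for homogeneous $x,y,z$ of degrees $\bar x,\bar y,\bar z$: $[x,y]=-\varepsilon(\bar x,\bar y)[y,x]$ and $\varepsilon(\bar z,\bar x)[\phi(x),[y,z]]+\varepsilon(\bar x,\bar y)[\phi(y),[z,x]]+\varepsilon(\bar y,\bar z)[\phi(z),[x,y]]=0$; regular means $\phi$ bijective. A subalgebra is a graded subspace $A$ with $[A,A]\subset A$, $\phi(A)=A$; abelian if $[A,A]=0$. An ideal is a graded subspace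 $I$ with $[I,L]\subset I$ and $\phi(I)=I$. $L$ is simple if $[L,L]\neq0$ and its only ideals are $0$ and $L$. $H=\bigoplus_gH_g$ is a maximal abelian graded subalgebra (so $\phi(H_0)=H_0$). For linear $\alpha:H_0\to\mathbb{K}$, $L_\alpha=\{v:[h,v]=\alpha(h)\phi(v)\ \forall h\in H_0\}$; $\Lambda=\{\alpha\in H_0^*\setminus\{0\}:L_\alpha\neq0\}$; $L$ is split if $L=H\oplus(\bigoplus_{\alpha\in\Lambda}L_\alpha)$. $\Lambda$ is symmetric if $\alpha\in\Lambda\Rightarrow-\alpha\in\Lambda$. For $z\in\mathbb{Z}$, $\alpha\phi^{z}:=\alpha\circ(\phi|_{H_0})^{z}$; $\mathbb{N}=\{0,1,2,\dots\}$. Connection: for $\alpha,\beta\in\Lambda$, $\alpha$ is connected to $\beta$ if there exist $k\ge1$ and $\alpha_1,\dots,\alpha_k\in\Lambda$ such that: if $k=1$, $\alpha_1\in\{\alpha\phi^{-n}:n\in\mathbb{N}\}\cap\{\pm\beta\phi^{-m}:m\in\mathbb{N}\}$; if $k\ge2$, then $\alpha_1\in\{\alpha\phi^{-n}:n\in\mathbb{N}\}$, for each $i=1,\dots,k-2$ one has $\alpha_1\phi^{-i}+\alpha_2\phi^{-i}+\alpha_3\phi^{-i+1}+\cdots+\alpha_{i+1}\phi^{-1}\in\Lambda$, and $\alpha_1\phi^{-k+1}+\alpha_2\phi^{-k+1}+\alpha_3\phi^{-k+2}+\cdots+\alpha_k\phi^{-1}\in\{\pm\beta\phi^{-m}:m\in\mathbb{N}\}$.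 Connectedness $\sim$ is an equivalence relation on $\Lambda$; $\Lambda_\alpha:=\{\beta\in\Lambda:\beta\sim\alpha\}$. Define $H_{\Lambda_\alpha}:=\mathrm{span}_{\mathbb{K}}\{[L_\beta,L_{-\beta}]:\beta\in\Lambda_\alpha\}\subset H$, $V_{\Lambda_\alpha}:=\bigoplus_{\beta\in\Lambda_\alpha}L_\beta$, and $L_{\Lambda_\alpha}:=H_{\Lambda_\alpha}\oplus V_{\Lambda_\alpha}$. *)

(* Defs.v *)
From HB Require Import structures.
From mathcomp Require Import all_boot all_order all_algebra.
From Stdlib Require Import ClassicalEpsilon.
Set Implicit Arguments. Unset Strict Implicit. Unset Printing Implicit Defensive.
Import Order.TTheory GRing.Theory Num.Theory.
Local Open Scope ring_scope.

Fixpoint allP (T : Type) (P : T -> Prop) (s : seq T) : Prop :=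
  match s with nil => True | x :: s' => P x /\ allP P s' end.

Section HomLieColor.
Variables (K : fieldType) (G : zmodType) (L : lmodType K).

Definition subspace (S : L -> Prop) : Prop :=
  S 0 /\ (forall (a : K) x y, S x -> S y -> S (a *: x + y)).

Definition span (S : L -> Prop) (x : L) : Prop :=
  exists s : seq (K * L), allP (fun p => S p.2) s /\ x = \sum_(p <- s) p.1 *: p.2.

Variable Lg : G -> L -> Prop.

Definition graded_space : Prop :=
  (forall g, subspace (Lg g)) /\
  (forall x, exists s : seq (G * L),
      uniq (map fst s) /\ allP (fun p => Lg p.1 p.2) s /\ x = \sum_(p <- s) p.2) /\
  (forall s : seq (G * L),
      uniq (map fst s) -> allP (fun p => Lg p.1 p.2) s -> \sum_(p <- s) p.2 = 0 ->
      allP (fun p => p.2 = 0) s).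

Definition graded_sub (A : L -> Prop) : Prop :=
  subspace A /\
  (forall x, A x -> exists s : seq (G * L),
      uniq (map fst s) /\ allP (fun p => Lg p.1 p.2 /\ A p.2) s /\ x = \sum_(p <- s) p.2).

Definition bicharacter (eps : G -> G -> K) : Prop :=
  (forall a b, eps a b != 0) /\
  (forall a b, eps a b * eps b a = 1) /\
  (forall a b c, eps a (b + c) = eps a b * eps a c) /\
  (forall a b c, eps (a + b) c = eps a c * eps b c).

Variables (br : L -> L -> L) (phi : L -> L) (eps : G -> G -> K).

Definition hom_lie_color : Prop :=
  bicharacter eps /\ graded_space /\
  (forall (a : K) x y z, br (a *: x + y) z = a *: br x z + br y z) /\
  (forall (a : K) x y z, br z (a *: x + y) = a *: br z x + br z y) /\
  (forall (a : K) x y, phi (a *: x + y) = a *: phi x + phi y) /\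
  (forall g h x y, Lg g x -> Lg h y -> Lg (g + h) (br x y)) /\
  (forall g x, Lg g x -> Lg g (phi x)) /\
  (forall x y, phi (br x y) = br (phi x) (phi y)) /\
  (forall g h x y, Lg g x -> Lg h y -> br x y = - (eps g h *: br y x)) /\
  (forall g h k x y z, Lg g x -> Lg h y -> Lg k z ->
      eps k g *: br (phi x) (br y z) + eps g h *: br (phi y) (br z x)
      + eps h k *: br (phi z) (br x y) = 0).

Definition regular : Prop := bijective phi.

Definition phi_stable (A : L -> Prop) : Prop :=
  (forall x, A x -> A (phi x)) /\ (forall y, A y -> exists x, A x /\ phi x = y).

Definition subalgebra (A : L -> Prop) : Prop :=
  graded_sub A /\ (forall x y, A x -> A y -> A (br x y)) /\ phi_stable A.

Definition abelian (A : L -> Prop) : Prop := forall x y, A x -> A y -> br x y = 0.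

Definition ideal (I : L -> Prop) : Prop :=
  graded_sub I /\ (forall x y, I x -> I (br x y)) /\ phi_stable I.

Definition simple : Prop :=
  (exists x y, br x y != 0) /\
  (forall I, ideal I -> (forall x, I x -> x = 0) \/ (forall x, I x)).

Variable H : L -> Prop.

Definition max_abelian_graded_subalgebra : Prop :=
  subalgebra H /\ abelian H /\
  (forall A, subalgebra A -> abelian A -> (forall x, H x -> A x) -> forall x, A x -> H x).

Definition H0 (x : L) : Prop := H x /\ Lg 0 x.

(* Linear forms on H_0 are represented by functions L -> K; only their values
   on H_0 matter. *)
Definition eqH0 (a b : L -> K) : Prop := forall h, H0 h -> a h = b h.

Definition linear_on_H0 (a : L -> K) : Prop :=
  forall (c : K) h1 h2, H0 h1 -> H0 h2 -> a (c *: h1 + h2) = c * a h1 + a h2.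

Definition Lroot (a : L -> K) (v : L) : Prop :=
  forall h, H0 h -> br h v = a h *: phi v.

Definition is_root (a : L -> K) : Prop :=
  linear_on_H0 a /\ (exists h, H0 h /\ a h != 0) /\ (exists v, v != 0 /\ Lroot a v).

Definition oppf (a : L -> K) : L -> K := fun h => - a h.

Definition is_split : Prop :=
  forall x, exists (h : L) (s : seq ((L -> K) * L)),
    H h /\ allP (fun p => is_root p.1 /\ Lroot p.1 p.2) s /\ x = h + \sum_(p <- s) p.2.

Definition symmetric_roots : Prop := forall a, is_root a -> is_root (oppf a).

(* the inverse map phi^{-1} (equal to the inverse of phi when phi is bijective) *)
Definition phiinv (y : L) : L := epsilon (inhabits (0 : L)) (fun x => phi x = y).

Definition aphim (a : L -> K) (n : nat) : L -> K := fun h => a (iter n phiinv h).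

Definition in_orbit (a b : L -> K) : Prop := exists n : nat, eqH0 b (aphim a n).

Definition in_pm_orbit (a b : L -> K) : Prop :=
  exists m : nat, eqH0 b (aphim a m) \/ eqH0 b (oppf (aphim a m)).

Definition dflt : L -> K := fun _ => 0.

(* With s = [:: alpha_1; ...; alpha_k] (0-indexed in Rocq),
   Ssum s i = alpha_1 phi^{-i} + alpha_2 phi^{-i} + alpha_3 phi^{-i+1} + ...
              + alpha_{i+1} phi^{-1};   Ssum s 0 = alpha_1. *)
Definition Ssum (s : seq (L -> K)) (i : nat) : L -> K := fun h =>
  nth dflt s 0 (iter i phiinv h)
  + \sum_(1 <= j < i.+1) nth dflt s j (iter (i.+1 - j) phiinv h).

Definition connected (a b : L -> K) : Prop :=
  exists s : seq (L -> K),
    (0 < size s)%N /\ allP is_root s /\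
    in_orbit a (nth dflt s 0) /\
    (forall i : nat, (1 <= i)%N -> (i <= size s - 2)%N -> is_root (Ssum s i)) /\
    in_pm_orbit b (Ssum s (size s - 1)).

Definition H_La (a : L -> K) : L -> Prop :=
  span (fun x => exists b u v, is_root b /\ connected a b /\
                   Lroot b u /\ Lroot (oppf b) v /\ x = br u v).

Definition V_La (a : L -> K) (x : L) : Prop :=
  exists s : seq ((L -> K) * L),
    allP (fun p => is_root p.1 /\ connected a p.1 /\ Lroot p.1 p.2) s /\
    x = \sum_(p <- s) p.2.

Definition L_La (a : L -> K) (x : L) : Prop :=
  exists h v, H_La a h /\ V_La a v /\ x = h + v.

Definition H_all : L -> Prop :=
  span (fun x => exists b u v, is_root b /\ Lroot b u /\ Lroot (oppf b) v /\ x = br u v).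

End HomLieColor.

(* Main.v *)
From Pilot Require Import Defs.
From HB Require Import structures.
From mathcomp Require Import all_boot all_order all_algebra.
From mathcomp Require Import zify.
From Stdlib Require Import ClassicalEpsilon Classical Lia.
Import Pilot.Defs.
Set Implicit Arguments. Unset Strict Implicit. Unset Printing Implicit Defensive.
Import Order.TTheory GRing.Theory Num.Theory.
Local Open Scope ring_scope.

Section AllP.
Variable T : Type.
Lemma allP_In (P : T -> Prop) s : allP P s <-> (forall x, List.In x s -> P x).
Proof.
elim: s => [|x s IH] /=; first by split.
split.
  by case=> Px /IH Hs y [<-|/Hs].
by move=> Hy; split; [apply: Hy; left| apply/IH => y Hin; apply: Hy; right].
Qed.
Lemma allP_cat (P : T -> Prop) s t : allP P s -> allP P t -> allP P (s ++ t).
Proof. by elim: s => [|x s IH] //= [Px Ps] Pt; split=> //; apply: IH. Qed.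
Lemma allP_impl (P Q : T -> Prop) s : (forall x, P x -> Q x) -> allP P s -> allP Q s.
Proof. by move=> PQ; elim: s => [|x s IH] //= [Px Ps]; split; [apply: PQ|apply: IH]. Qed.
Lemma allP_map (U : Type) (f : U -> T) (P : T -> Prop) s :
  allP (fun x => P (f x)) s -> allP P (map f s).
Proof. by elim: s => [|x s IH] //= [Px Ps]; split=> //; apply: IH. Qed.
Lemma allP_mapE (U : Type) (f : U -> T) (P : T -> Prop) s :
  allP P (map f s) -> allP (fun x => P (f x)) s.
Proof. by elim: s => [|x s IH] //= [Px Ps]; split=> //; apply: IH. Qed.
End AllP.

Lemma sum_allP_eq (R : zmodType) (I : Type) (s : seq I) (f g : I -> R) :
  allP (fun i => f i = g i) s -> \sum_(i <- s) f i = \sum_(i <- s) g i.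
Proof. by elim: s => [|i s IH] /=; [rewrite !big_nil|case=> E /IH; rewrite !big_cons E => ->]. Qed.

Section Main.
Variables (K : fieldType) (G : zmodType) (L : lmodType K).
Variables (Lg : G -> L -> Prop) (br : L -> L -> L) (phi : L -> L) (eps : G -> G -> K)
    (H : L -> Prop).
Hypothesis hl : hom_lie_color Lg br phi eps.
Hypothesis reg : regular phi.
Hypothesis mag : max_abelian_graded_subalgebra Lg br phi H.
Hypothesis spl : is_split Lg br phi H.
Hypothesis sym : symmetric_roots Lg br phi H.

Lemma eps_nz a b : eps a b != 0. Proof. by case: hl => [[nz _] _]; apply: nz. Qed.
Lemma eps_inv a b : eps a b * eps b a = 1. Proof. by case: hl => [[_ [e _]] _]; apply: e. Qed.
Lemma eps_addl a b c : eps (a + b) c = eps a c * eps b c.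
Proof. by case: hl => [[_ [_ [_ e]]] _]; apply: e. Qed.
Lemma eps_addr a b c : eps a (b + c) = eps a b * eps a c.
Proof. by case: hl => [[_ [_ [e _]]] _]; apply: e. Qed.
Lemma eps0l c : eps 0 c = 1.
Proof.
have := eps_addl 0 0 c; rewrite addr0 => E.
have := eps_nz 0 c => nz.
by apply: (mulfI nz); rewrite mulr1 -E.
Qed.
Lemma eps0r c : eps c 0 = 1.
Proof.
have := eps_addr c 0 0; rewrite addr0 => E.
have := eps_nz c 0 => nz.
by apply: (mulfI nz); rewrite mulr1 -E.
Qed.

Lemma gsp : graded_space Lg. Proof. by case: hl => [_ [e _]]. Qed.
Lemma Lg_sub g : subspace (Lg g). Proof. by case: gsp => e _; apply: e. Qed.
Lemma Lg0 g : Lg g 0. Proof. by case: (Lg_sub g). Qed.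
Lemma LgD g x y : Lg g x -> Lg g y -> Lg g (x + y).
Proof. by case: (Lg_sub g) => _ h Hx Hy; have := h 1 x y Hx Hy; rewrite scale1r. Qed.
Lemma LgZ g c x : Lg g x -> Lg g (c *: x).
Proof. by case: (Lg_sub g) => z h Hx; have := h c x 0 Hx z; rewrite addr0. Qed.
Lemma LgN g x : Lg g x -> Lg g (- x).
Proof. by move=> Hx; rewrite -scaleN1r; apply: LgZ. Qed.
Lemma Lg_dec x : exists s : seq (G * L),
      uniq (map fst s) /\ allP (fun p => Lg p.1 p.2) s /\ x = \sum_(p <- s) p.2.
Proof. by case: gsp => _ [e _]; apply: e. Qed.
Lemma Lg_uniq (s : seq (G * L)) :
      uniq (map fst s) -> allP (fun p => Lg p.1 p.2) s -> \sum_(p <- s) p.2 = 0 ->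
      allP (fun p => p.2 = 0) s.
Proof. by case: gsp => _ [_ e]; apply: e. Qed.

Lemma brDZl a x y z : br (a *: x + y) z = a *: br x z + br y z.
Proof. by case: hl => [_ [_ [e _]]]; apply: e. Qed.
Lemma brDZr a x y z : br z (a *: x + y) = a *: br z x + br z y.
Proof. by case: hl => [_ [_ [_ [e _]]]]; apply: e. Qed.
Lemma phiDZ a x y : phi (a *: x + y) = a *: phi x + phi y.
Proof. by case: hl => [_ [_ [_ [_ [e _]]]]]; apply: e. Qed.
Lemma br_deg g h x y : Lg g x -> Lg h y -> Lg (g + h) (br x y).
Proof. by case: hl => [_ [_ [_ [_ [_ [e _]]]]]]; apply: e. Qed.
Lemma phi_deg g x : Lg g x -> Lg g (phi x).
Proof. by case: hl => [_ [_ [_ [_ [_ [_ [e _]]]]]]]; apply: e. Qed.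
Lemma phi_br x y : phi (br x y) = br (phi x) (phi y).
Proof. by case: hl => [_ [_ [_ [_ [_ [_ [_ [e _]]]]]]]]; apply: e. Qed.
Lemma skew g h x y : Lg g x -> Lg h y -> br x y = - (eps g h *: br y x).
Proof. by case: hl => [_ [_ [_ [_ [_ [_ [_ [_ [e _]]]]]]]]]; apply: e. Qed.
Lemma jac g h k x y z : Lg g x -> Lg h y -> Lg k z ->
      eps k g *: br (phi x) (br y z) + eps g h *: br (phi y) (br z x)
      + eps h k *: br (phi z) (br x y) = 0.
Proof. by case: hl => [_ [_ [_ [_ [_ [_ [_ [_ [_ e]]]]]]]]]; apply: e. Qed.

Lemma br0r z : br z 0 = 0.
Proof. by have := brDZr (-1) 0 0 z; rewrite scaler0 addr0 scaleN1r addNr. Qed.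
Lemma br0l z : br 0 z = 0.
Proof. by have := brDZl (-1) 0 0 z; rewrite scaler0 addr0 scaleN1r addNr. Qed.
Lemma brDr z x y : br z (x + y) = br z x + br z y.
Proof. by have := brDZr 1 x y z; rewrite !scale1r. Qed.
Lemma brDl z x y : br (x + y) z = br x z + br y z.
Proof. by have := brDZl 1 x y z; rewrite !scale1r. Qed.
Lemma brZr z a x : br z (a *: x) = a *: br z x.
Proof. by have := brDZr a x 0 z; rewrite !addr0 br0r addr0. Qed.
Lemma brZl z a x : br (a *: x) z = a *: br x z.
Proof. by have := brDZl a x 0 z; rewrite !addr0 br0l addr0. Qed.
Lemma brNr z x : br z (- x) = - br z x.
Proof. by rewrite -scaleN1r brZr scaleN1r. Qed.
Lemma brNl z x : br (- x) z = - br x z.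
Proof. by rewrite -scaleN1r brZl scaleN1r. Qed.
Lemma phi0 : phi 0 = 0.
Proof. by have := phiDZ (-1) 0 0; rewrite scaler0 addr0 scaleN1r addNr. Qed.
Lemma phiD x y : phi (x + y) = phi x + phi y.
Proof. by have := phiDZ 1 x y; rewrite !scale1r. Qed.
Lemma phiZ a x : phi (a *: x) = a *: phi x.
Proof. by have := phiDZ a x 0; rewrite !addr0 phi0 addr0. Qed.
Lemma phiN x : phi (- x) = - phi x.
Proof. by rewrite -scaleN1r phiZ scaleN1r. Qed.

Lemma br_sumr (I : Type) (s : seq I) (f : I -> L) z :
  br z (\sum_(i <- s) f i) = \sum_(i <- s) br z (f i).
Proof. elim: s => [|i s IH]; by rewrite ?big_nil ?br0r // !big_cons brDr IH. Qed.
Lemma br_suml (I : Type) (s : seq I) (f : I -> L) z :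
  br (\sum_(i <- s) f i) z = \sum_(i <- s) br (f i) z.
Proof. elim: s => [|i s IH]; by rewrite ?big_nil ?br0l // !big_cons brDl IH. Qed.
Lemma phi_sum (I : Type) (s : seq I) (f : I -> L) :
  phi (\sum_(i <- s) f i) = \sum_(i <- s) phi (f i).
Proof. elim: s => [|i s IH]; by rewrite ?big_nil ?phi0 // !big_cons phiD IH. Qed.

Lemma phi_inj : injective phi. Proof. by case: reg => g K1 _; apply: can_inj K1. Qed.
Lemma phi_eq0 x : phi x = 0 -> x = 0.
Proof. by move=> E; apply: phi_inj; rewrite E phi0. Qed.

Notation pinv := (phiinv phi).
Lemma pinvK y : phi (pinv y) = y.
Proof.
rewrite /phiinv; apply: (epsilon_spec (inhabits 0) (fun x => phi x = y)).
by case: reg => g _ K2; exists (g y).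
Qed.
Lemma phiK x : pinv (phi x) = x. Proof. by apply: phi_inj; rewrite pinvK. Qed.
Lemma pinvDZ a x y : pinv (a *: x + y) = a *: pinv x + pinv y.
Proof. by apply: phi_inj; rewrite phiDZ !pinvK. Qed.
Lemma pinv_br x y : pinv (br x y) = br (pinv x) (pinv y).
Proof. by apply: phi_inj; rewrite phi_br !pinvK. Qed.

Section SubGen.
Variables (P : L -> Prop) (sP : subspace P).
Lemma sub0 : P 0. Proof. by case: sP. Qed.
Lemma subD x y : P x -> P y -> P (x + y).
Proof. by case: sP => _ h Hx Hy; have := h 1 x y Hx Hy; rewrite scale1r. Qed.
Lemma subZ c x : P x -> P (c *: x).
Proof. by case: sP => z h Hx; have := h c x 0 Hx z; rewrite addr0. Qed.
Lemma subN x : P x -> P (- x).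
Proof. by move=> Hx; rewrite -scaleN1r; apply: subZ. Qed.
Lemma subB x y : P x -> P y -> P (x - y).
Proof. by move=> Hx Hy; apply: subD => //; apply: subN. Qed.
Lemma sub_sum (I : Type) (s : seq I) (f : I -> L) :
  allP (fun i => P (f i)) s -> P (\sum_(i <- s) f i).
Proof.
elim: s => [|i s IH] /=; first by move=> _; rewrite big_nil; apply: sub0.
by case=> Hi Hs; rewrite big_cons; apply: subD => //; apply: IH.
Qed.
End SubGen.

Lemma sub_intro (P : L -> Prop) : P 0 -> (forall (a : K) x y, P x -> P y -> P (a *: x + y)) -> subspace P.
Proof. by split. Qed.

Fixpoint ins (p : G * L) (t : seq (G * L)) : seq (G * L) :=
  match t with
  | [::] => [:: p]
  | q :: t' => if q.1 == p.1 then (q.1, p.2 + q.2) :: t' else q :: ins p t'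
  end.

Lemma ins_sum p t : \sum_(q <- ins p t) q.2 = p.2 + \sum_(q <- t) q.2.
Proof.
elim: t => [|q t IH] /=; first by rewrite big_cons !big_nil.
case: ifP => _; rewrite !big_cons /=; first by rewrite addrA.
by rewrite IH addrCA.
Qed.
Lemma ins_mem p t g : (g \in map fst (ins p t)) = (g == p.1) || (g \in map fst t).
Proof.
elim: t => [|q t IH] /=; first by rewrite !inE orbF.
case: ifP => E /=; rewrite !inE.
  by rewrite -(eqP E) orbA orbb.
by rewrite IH orbCA.
Qed.
Lemma ins_uniq p t : uniq (map fst t) -> uniq (map fst (ins p t)).
Proof.
elim: t => [|q t IH] //=.
case: ifP => E /=; first by [].
case/andP => nq ut; rewrite IH // andbT ins_mem negb_or nq andbT.
by rewrite E.
Qed.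
Lemma ins_allP (P : G -> L -> Prop) p t :
  (forall g x y, P g x -> P g y -> P g (x + y)) -> P p.1 p.2 ->
  allP (fun q => P q.1 q.2) t -> allP (fun q => P q.1 q.2) (ins p t).
Proof.
move=> PD Pp; elim: t => [|q t IH] /=; first by [].
case=> Pq Pt; case: ifP => E /=.
  by split=> //; apply: PD => //; rewrite (eqP E).
by split=> //; apply: IH.
Qed.
Lemma ins_In p t q : List.In q t -> q.1 != p.1 -> List.In q (ins p t).
Proof.
elim: t => [|r t IH] //= Hq nq.
case: ifP => E /=.
  case: Hq => [Eq|Hq]; first by rewrite -Eq E in nq.
  by right.
by case: Hq => [->|Hq]; [left|right; apply: IH].
Qed.

Lemma merge (P : G -> L -> Prop) (s : seq (G * L)) :
  (forall g x y, P g x -> P g y -> P g (x + y)) ->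
  allP (fun q => P q.1 q.2) s ->
  exists s', uniq (map fst s') /\ allP (fun q => P q.1 q.2) s' /\
             \sum_(q <- s') q.2 = \sum_(q <- s) q.2.
Proof.
move=> PD; elim: s => [|p s IH] /=; first by move=> _; exists [::].
case=> Pp /IH [s' [u [a e]]]; exists (ins p s'); split; first by apply: ins_uniq.
split; first by apply: ins_allP.
by rewrite ins_sum e big_cons.
Qed.

Lemma deg_phi g x : Lg g (phi x) -> Lg g x.
Proof.
move=> Hg; have [s [us [hs Ex]]] := Lg_dec x; rewrite Ex in Hg *.
set t := ins (g, - phi (\sum_(p <- s) p.2)) (map (fun p => (p.1, phi p.2)) s).
have ut : uniq (map fst t).
  apply: ins_uniq; rewrite -map_comp.
  by rewrite (eq_map (g := fst)).
have Ht : allP (fun q => Lg q.1 q.2) t.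
  apply: (ins_allP (P := fun g x => Lg g x)); rewrite /=.
  - by move=> g0 x0 y0 H1 H2; apply: LgD.
  - by apply: LgN.
  - by apply: allP_map; apply: allP_impl hs => p /=; apply: phi_deg.
have St : \sum_(q <- t) q.2 = 0.
  by rewrite ins_sum /= big_map -phi_sum addNr.
have Z := Lg_uniq ut Ht St.
apply: (sub_sum (Lg_sub g)); apply/allP_In => p Hp.
case: (boolP (p.1 == g)) => E.
  by rewrite -(eqP E); move/allP_In: hs; apply.
have : List.In (p.1, phi p.2) t.
  apply: ins_In => //; apply/List.in_map_iff; by exists p.
move/allP_In: Z => Z /Z /= /phi_eq0 ->; exact: Lg0.
Qed.

Lemma H_sub : subspace H. Proof. by case: mag => [[[e _] _] _]. Qed.
Lemma H_ab x y : H x -> H y -> br x y = 0. Proof. by case: mag => [_ [e _]]; apply: e. Qed.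
Lemma H_phi x : H x -> H (phi x). Proof. by case: mag => [[_ [_ [e _]]] _]; apply: e. Qed.
Lemma H_phiS y : H y -> exists x, H x /\ phi x = y.
Proof. by case: mag => [[_ [_ [_ e]]] _]; apply: e. Qed.
Lemma H_pinv y : H y -> H (pinv y).
Proof. by move=> /H_phiS [x [Hx <-]]; rewrite phiK. Qed.
Lemma Lg_pinv g y : Lg g y -> Lg g (pinv y).
Proof. by move=> Hy; apply: deg_phi; rewrite pinvK. Qed.

Notation H0' := (H0 Lg H).
Notation eqH := (eqH0 Lg H).
Notation LR := (Lroot Lg br phi H).
Notation isr := (is_root Lg br phi H).
Notation conn := (connected Lg br phi H).

Lemma H0_phi h : H0' h -> H0' (phi h).
Proof. by case=> Hh Gh; split; [apply: H_phi|apply: phi_deg]. Qed.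
Lemma H0_pinv h : H0' h -> H0' (pinv h).
Proof. by case=> Hh Gh; split; [apply: H_pinv|apply: Lg_pinv]. Qed.
Lemma H0_iter n h : H0' h -> H0' (iter n pinv h).
Proof. by elim: n => [|n IH] //= Hh; apply: H0_pinv; apply: IH. Qed.
Lemma H0_H h : H0' h -> H h. Proof. by case. Qed.

Lemma pinv0 : pinv 0 = 0. Proof. by apply: phi_inj; rewrite pinvK phi0. Qed.
Lemma pinvD x y : pinv (x + y) = pinv x + pinv y.
Proof. by have := pinvDZ 1 x y; rewrite !scale1r. Qed.
Lemma pinvZ a x : pinv (a *: x) = a *: pinv x.
Proof. by have := pinvDZ a x 0; rewrite !addr0 pinv0 addr0. Qed.

Lemma LR_sub b : subspace (LR b).
Proof.
split; first by move=> h _; rewrite br0r phi0 scaler0.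
move=> a x y Hx Hy h Hh.
by rewrite brDZr Hx // Hy // phiDZ scalerDr !scalerA mulrC.
Qed.
Lemma LR_eq b c v : LR b v -> eqH b c -> LR c v.
Proof. by move=> Hv E h Hh; rewrite -E // Hv. Qed.
Lemma LR_H x : H x -> LR (dflt (L := L)) x.
Proof. by move=> Hx h Hh; rewrite H_ab ?scale0r //; apply: H0_H. Qed.
Lemma LR_phi b v : LR b v -> LR (aphim phi b 1) (phi v).
Proof.
move=> Hv h Hh; rewrite /aphim /= -{1}(pinvK h) -phi_br Hv ?phiZ //.
exact: H0_pinv.
Qed.
Lemma LR_pinv b v : LR b v -> LR (fun h => b (phi h)) (pinv v).
Proof.
move=> Hv h Hh; apply: phi_inj; rewrite phi_br pinvK Hv; last exact: H0_phi.
by rewrite phiZ.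
Qed.

Lemma root_graded b y : LR b y -> exists s : seq (G * L),
  allP (fun p => Lg p.1 p.2 /\ LR b p.2) s /\ y = \sum_(p <- s) p.2.
Proof.
move=> Hy; have [s [us [hs Ey]]] := Lg_dec y.
exists s; split=> //; apply/allP_In => p Hp; split; first by move/allP_In: hs; apply.
move=> h Hh.
set t := map (fun p => (p.1, br h p.2 - b h *: phi p.2)) s.
have ut : uniq (map fst t) by rewrite /t -map_comp (eq_map (g := fst)).
have Ht : allP (fun q => Lg q.1 q.2) t.
  apply: allP_map; apply: allP_impl hs => q /= Hq.
  apply: (subB (Lg_sub q.1)); last by apply: LgZ; apply: phi_deg.
  by rewrite -(add0r q.1); apply: br_deg => //; case: Hh.
have St : \sum_(q <- t) q.2 = 0.
  rewrite big_map /= sumrB -br_sumr -scaler_sumr -phi_sum -Ey Hy //.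
  by rewrite subrr.
have Z := Lg_uniq ut Ht St.
have : List.In (p.1, br h p.2 - b h *: phi p.2) t.
  by apply/List.in_map_iff; exists p.
by move/allP_In: Z => Z /Z /= /eqP; rewrite subr_eq0 => /eqP.
Qed.

Lemma weighted (s : seq ((L -> K) * L)) h :
  allP (fun p => LR p.1 p.2) s -> \sum_(p <- s) p.2 = 0 -> H0' h ->
  \sum_(p <- s) p.1 h *: p.2 = 0.
Proof.
move=> Hs S0 Hh; apply: phi_eq0.
have : br h (\sum_(p <- s) p.2) = 0 by rewrite S0 br0r.
rewrite br_sumr phi_sum => E; apply: (etrans _ E).
apply: sum_allP_eq; apply: allP_impl Hs => p Hp.
by rewrite phiZ Hp.
Qed.

Lemma zmod_aux (a c d : L) : a - c + (- (a + d) + (c + d)) = 0.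
Proof. by rewrite opprD (addrC c d) [-a - d + _]addrA subrK addrACA subrr addNr addr0. Qed.

Lemma sep n : forall (s : seq ((L -> K) * L)) b x, size s = n -> LR b x ->
  allP (fun p => LR p.1 p.2 /\ ~ eqH b p.1) s -> x + \sum_(p <- s) p.2 = 0 -> x = 0.
Proof.
elim: n => [|n IH] [|[al y] t] b x //=.
  by move=> _ _ _; rewrite big_nil addr0.
move=> [Sz] Hx [[Hy nE] Ht] S0.
have [h0 [Hh0 nh]] : exists h0, H0' h0 /\ b h0 <> al h0.
  apply: NNPP => C; apply: nE => h Hh; apply: NNPP => D; apply: C; by exists h.
rewrite big_cons /= in S0.
have Ht' : allP (fun p => LR p.1 p.2) t by apply: allP_impl Ht => p [].
have W : b h0 *: x + (al h0 *: y + \sum_(p <- t) p.1 h0 *: p.2) = 0.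
  have := @weighted ((b, x) :: (al, y) :: t) h0; rewrite !big_cons /=; apply => //.
set c := b h0 - al h0.
have cx0 : c *: x = 0.
  apply: (IH (map (fun p => (p.1, (p.1 h0 - al h0) *: p.2)) t) b (c *: x)).
  - by rewrite size_map.
  - by apply: (subZ (LR_sub b)).
  - apply: allP_map; apply: allP_impl Ht => p [Hp nEp]; split => //.
    by apply: (subZ (LR_sub p.1)).
  rewrite big_map /=.
  under eq_bigr do rewrite scalerBl.
  rewrite sumrB -scaler_sumr.
  have E1 : \sum_(p <- t) p.1 h0 *: p.2 = - (b h0 *: x + al h0 *: y).
    by apply/eqP; rewrite -addr_eq0 addrC -addrA W.
  have E2 : \sum_(p <- t) p.2 = - (x + y).
    by apply/eqP; rewrite -addr_eq0 addrC -addrA S0.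
  by rewrite E1 E2 /c scalerBl scalerN opprK scalerDr zmod_aux.
move/eqP: cx0; rewrite scaler_eq0 subr_eq0 => /orP [/eqP E|/eqP //].
by case: nh.
Qed.

Notation Dflt := (@dflt K L).
Notation shift b := (aphim phi b 1).
Definition sumphi (b c : L -> K) : L -> K := fun h => b (pinv h) + c (pinv h).
Definition bphi (b : L -> K) : L -> K := fun h => b (phi h).

Lemma iter_pinv n h : iter n pinv (pinv h) = pinv (iter n pinv h).
Proof. by rewrite -iterSr iterS. Qed.

Lemma H0DZ a h1 h2 : H0' h1 -> H0' h2 -> H0' (a *: h1 + h2).
Proof.
case=> H1 G1 [H2 G2]; split; first by case: H_sub => _; apply.
by case: (Lg_sub 0) => _; apply.
Qed.

Lemma isr_eq b c : isr b -> eqH b c -> isr c.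
Proof.
move=> [lb [[h [Hh nz]] [v [nv Hv]]]] E; split.
  move=> a h1 h2 H1 H2; rewrite -!E //; first by apply: lb.
  exact: H0DZ.
split; first by exists h; rewrite -E.
by exists v; split => //; apply: LR_eq Hv E.
Qed.
Lemma isr_opp b : isr b -> isr (oppf b). Proof. exact: sym. Qed.
Lemma isr_shift b : isr b -> isr (shift b).
Proof.
move=> [lb [[h [Hh nz]] [v [nv Hv]]]]; split.
  move=> a h1 h2 H1 H2; rewrite /aphim /= pinvDZ lb //; exact: H0_pinv.
split; first by exists (phi h); split; [apply: H0_phi|rewrite /aphim /= phiK].
exists (phi v); split; last exact: LR_phi.
by apply/eqP => /phi_eq0; apply/eqP.
Qed.
Lemma isr_aphim b n : isr b -> isr (aphim phi b n).
Proof.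
move=> Hb; elim: n => [|n IH]; first by apply: (isr_eq (c := aphim phi b 0) Hb) => h.
apply: isr_eq (isr_shift IH) _ => h _.
by rewrite /aphim /= iter_pinv.
Qed.
Lemma isr_bphi b : isr b -> isr (bphi b).
Proof.
move=> [lb [[h [Hh nz]] [v [nv Hv]]]]; split.
  move=> a h1 h2 H1 H2; rewrite /bphi phiDZ lb //; exact: H0_phi.
split; first by exists (pinv h); split; [apply: H0_pinv|rewrite /bphi pinvK].
exists (pinv v); split; last exact: LR_pinv.
apply/eqP => E; move/eqP: nv; apply; by rewrite -(pinvK v) E phi0.
Qed.
Lemma isr_sign b e : isr b -> (e = 1 \/ e = -1) -> isr (fun h => e * b h).
Proof.
move=> Hb [->|->].
  by apply: isr_eq Hb _ => h _; rewrite mul1r.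
by apply: isr_eq (isr_opp Hb) _ => h _; rewrite mulN1r.
Qed.
Lemma lin_sumphi b c : linear_on_H0 Lg H b -> linear_on_H0 Lg H c ->
  linear_on_H0 Lg H (sumphi b c).
Proof.
move=> lb lc a h1 h2 H1 H2; rewrite /sumphi pinvDZ.
rewrite lb ?lc; try exact: H0_pinv.
by rewrite mulrDr addrACA.
Qed.
Lemma isr_lin b : isr b -> linear_on_H0 Lg H b. Proof. by case. Qed.
Lemma isr_vec d v : linear_on_H0 Lg H d -> ~ eqH d Dflt -> LR d v -> v <> 0 -> isr d.
Proof.
move=> ld nE Hv nv; split => //; split; last by exists v; split => //; apply/eqP.
apply: NNPP => C; apply: nE => h Hh; apply: NNPP => D; apply: C; exists h; split=> //.
by apply/eqP.
Qed.

Lemma nth_shift (s : seq (L -> K)) j h :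
  nth Dflt (map (fun f => shift f) s) j h = nth Dflt s j (pinv h).
Proof. by elim: s j => [|f s IH] [|j] //=. Qed.

Lemma Ssum_shift s i h : Ssum phi (map (fun f => shift f) s) i h = Ssum phi s i (pinv h).
Proof.
rewrite /Ssum nth_shift -iter_pinv; congr (_ + _).
by apply: eq_bigr => j _; rewrite nth_shift iter_pinv.
Qed.

Lemma Ssum_S s i h : Ssum phi s i.+1 h = Ssum phi s i (pinv h) + nth Dflt s i.+1 (pinv h).
Proof.
rewrite /Ssum big_nat_recr //= subSnn /= -addrA; congr (_ + _); first by rewrite -iterSr.
congr (_ + _); apply: eq_big_nat => j /andP [_ lt].
by rewrite (subSn (ltnW lt)) iterSr.
Qed.

Lemma Ssum_rcons s c i h : (i < size s)%N -> Ssum phi (rcons s c) i h = Ssum phi s i h.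
Proof.
move=> lt; rewrite /Ssum nth_rcons (leq_ltn_trans _ lt) //; congr (_ + _).
apply: eq_big_nat => j /andP [_ lt']; rewrite nth_rcons.
by rewrite (leq_trans lt' lt).
Qed.

Lemma conn_refl a : isr a -> conn a a.
Proof.
move=> Ha; exists [:: a]; split => //; split; first by split.
split; first by exists 0%N.
split; first by move=> [|i].
exists 0%N; left => h _; by rewrite /Ssum /aphim /= big_geq // addr0.
Qed.

Lemma conn_eqH a b b' : conn a b -> eqH b b' -> conn a b'.
Proof.
move=> [s [sz [rs [orb [mid [m pm]]]]]] E; exists s; do 4! split => //.
exists m; case: pm => P; [left|right] => h Hh; rewrite P // /aphim /oppf E //;
  exact: H0_iter.
Qed.

Lemma conn_opp a b : conn a b -> conn a (oppf b).
Proof.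
move=> [s [sz [rs [orb [mid [m pm]]]]]]; exists s; do 4! split => //.
exists m; case: pm => P; [right|left] => h Hh; rewrite P // /aphim /oppf //.
by rewrite opprK.
Qed.

Lemma conn_shift a b : conn a b -> conn a (shift b).
Proof.
move=> [s [sz [rs [[n orb] [mid [m pm]]]]]]; exists (map (fun f => shift f) s).
rewrite size_map; split => //; split.
  by apply: allP_map; apply: allP_impl rs => f; apply: isr_shift.
split.
  exists n.+1 => h Hh; rewrite nth_shift orb; last exact: H0_pinv.
  by rewrite /aphim iterSr.
split.
  move=> i i1 i2; apply: isr_eq (isr_shift (mid i i1 i2)) _ => h _.
  by rewrite Ssum_shift.
exists m; case: pm => P; [left|right] => h Hh; rewrite Ssum_shift P;
  try exact: H0_pinv; by rewrite /aphim /oppf /= iter_pinv.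
Qed.

Lemma conn_bphi a b : conn a b -> conn a (bphi b).
Proof.
move=> [s [sz [rs [orb [mid [m pm]]]]]]; exists s; do 4! split => //.
exists m.+1; case: pm => P; [left|right] => h Hh; rewrite P //;
  by rewrite /aphim /oppf /bphi iterS pinvK.
Qed.

Lemma conn_ext a b c : conn a b -> isr b -> isr c -> isr (sumphi b c) ->
  conn a (sumphi b c).
Proof.
move=> [s [sz [rs [orb [mid [m pm]]]]]] Rb Rc Rd.
have [e [He Pe]] : exists e : K, (e = 1 \/ e = -1) /\
    eqH (Ssum phi s (size s - 1)) (fun h => e * aphim phi b m h).
  case: pm => P; [exists 1|exists (-1)]; split; auto; move=> h Hh; rewrite P //;
    by rewrite /oppf ?mul1r ?mulN1r.
move: sz mid Pe; case Es : (size s) => [|k] // _ mid Pe.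
rewrite subn1 /= in Pe.
exists (rcons s (fun h => e * aphim phi c m h)).
rewrite size_rcons Es; split => //.
split; first by rewrite -cats1; apply: allP_cat => //; split => //;
  apply: isr_sign => //; apply: isr_aphim.
split; first by rewrite nth_rcons Es.
split.
  move=> i i1 i2; case: (ltnP i k) => [lt|ge].
    apply: (isr_eq (mid i i1 _)); first by lia.
    by move=> h _; rewrite Ssum_rcons // Es; lia.
  have -> : i = k by lia.
  apply: (isr_eq (isr_sign (isr_aphim m Rb) He)) => h Hh.
  by rewrite Ssum_rcons ?Es // Pe.
exists m; rewrite subn1 /=.
have E : forall h, H0' h -> Ssum phi (rcons s (fun h => e * aphim phi c m h)) k.+1 h
    = e * (aphim phi b m (pinv h) + aphim phi c m (pinv h)).
  move=> h Hh; rewrite Ssum_S Ssum_rcons ?Es // Pe; last exact: H0_pinv.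
  by rewrite nth_rcons Es ltnn eqxx mulrDr.
case: He => He; [left|right] => h Hh; rewrite E // He /aphim /sumphi /oppf !iter_pinv.
  by rewrite mul1r.
by rewrite mulN1r.
Qed.

Lemma LR_br_hom g g' b c v w : Lg g v -> Lg g' w -> LR b v -> LR c w ->
  LR (sumphi b c) (br v w).
Proof.
move=> Gv Gw Hv Hw h Hh.
have Hh' : H0' (pinv h) := H0_pinv Hh.
have Gh' : Lg 0 (pinv h) by case: Hh'.
have J := jac Gh' Gv Gw.
rewrite eps0r eps0l !scale1r in J.
rewrite (skew Gw Gh') eps0r scale1r (Hw _ Hh') (Hv _ Hh') in J.
rewrite brNr !brZr (skew (phi_deg Gw) (phi_deg Gv)) pinvK in J.
rewrite !scalerN !scalerA mulrAC eps_inv mul1r in J.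
rewrite phi_br /sumphi.
by apply/eqP; rewrite -subr_eq0 scalerDl opprD addrA addrAC J.
Qed.

Lemma br_extR (P : L -> Prop) c x : subspace P ->
  (forall y g, Lg g y -> LR c y -> P (br x y)) -> forall y, LR c y -> P (br x y).
Proof.
move=> sP Hh y Hy; have [s [hs ->]] := root_graded Hy.
rewrite br_sumr; apply: (sub_sum sP); apply: allP_impl hs => p [Gp Hp].
exact: Hh Gp Hp.
Qed.
Lemma br_extL (P : L -> Prop) b y : subspace P ->
  (forall x g, Lg g x -> LR b x -> P (br x y)) -> forall x, LR b x -> P (br x y).
Proof.
move=> sP Hh x Hx; have [s [hs ->]] := root_graded Hx.
rewrite br_suml; apply: (sub_sum sP); apply: allP_impl hs => p [Gp Hp].
exact: Hh Gp Hp.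
Qed.
Lemma br_ext (P : L -> Prop) b c : subspace P ->
  (forall x y g g', Lg g x -> Lg g' y -> LR b x -> LR c y -> P (br x y)) ->
  forall x y, LR b x -> LR c y -> P (br x y).
Proof.
move=> sP Hh x y Hx Hy; apply: (br_extL sP _ Hx) => x' g Gx Hx'.
apply: (br_extR sP _ Hy) => y' g' Gy Hy'; exact: Hh Gx Gy Hx' Hy'.
Qed.
Lemma LR_br b c v w : LR b v -> LR c w -> LR (sumphi b c) (br v w).
Proof.
apply: br_ext; first exact: LR_sub.
move=> x y g g' Gx Gy; exact: (LR_br_hom Gx Gy).
Qed.

Lemma root_ndflt b : isr b -> ~ eqH Dflt b.
Proof. by move=> [_ [[h [Hh nz]] _]] E; move/eqP: nz; apply; rewrite -E. Qed.
Lemma root_ndflt' b : isr b -> ~ eqH b Dflt.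
Proof. by move=> [_ [[h [Hh nz]] _]] E; move/eqP: nz; apply; rewrite E. Qed.

Lemma L0_H v : LR Dflt v -> H v.
Proof.
move=> Hv; have [h [s [Hh [hs Ev]]]] := spl v.
have : h - v = 0.
  apply: (@sep (size s) s Dflt) => //.
  - by apply: (subB (LR_sub Dflt)) => //; apply: LR_H.
  - by apply: allP_impl hs => p [Rp Hp]; split => //; apply: root_ndflt.
  by rewrite Ev opprD addrA subrr add0r addNr.
by move/subr0_eq => <-.
Qed.

Lemma HV0 h (s : seq ((L -> K) * L)) : H h -> allP (fun p => isr p.1 /\ LR p.1 p.2) s ->
  h = \sum_(p <- s) p.2 -> h = 0.
Proof.
move=> Hh hs E; apply: oppr_inj; rewrite oppr0.
apply: (@sep (size s) s Dflt) => //.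
- by apply: (subN (LR_sub Dflt)); apply: LR_H.
- by apply: allP_impl hs => p [Rp Hp]; split => //; apply: root_ndflt.
by rewrite -E addNr.
Qed.

Lemma span_sub (S : L -> Prop) : subspace (span S).
Proof.
split; first by exists [::]; rewrite big_nil.
move=> c x y [s [hs ->]] [t [ht ->]].
exists (map (fun p => (c * p.1, p.2)) s ++ t); split.
  by apply: allP_cat => //; apply: allP_map.
by rewrite big_cat big_map scaler_sumr; congr (_ + _); apply: eq_bigr => p _; rewrite scalerA.
Qed.
Lemma span_gen (S : L -> Prop) t : S t -> span S t.
Proof. by move=> St; exists [:: (1, t)]; split; rewrite ?big_cons ?big_nil ?scale1r ?addr0. Qed.
Lemma span_ind (S Q : L -> Prop) x : span S x -> subspace Q -> (forall t, S t -> Q t) -> Q x.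
Proof.
move=> [s [hs ->]] sQ HQ; apply: (sub_sum sQ); apply: allP_impl hs => p Sp.
by apply: (subZ sQ); apply: HQ.
Qed.
Lemma span_mono (S S' : L -> Prop) x : (forall t, S t -> S' t) -> span S x -> span S' x.
Proof. by move=> SS Sx; apply: (span_ind Sx (span_sub S')) => t /SS; apply: span_gen. Qed.

Notation HLa a := (H_La Lg br phi H a).
Notation VLa a := (V_La Lg br phi H a).
Notation LLa a := (L_La Lg br phi H a).

Lemma V_sub a : subspace (VLa a).
Proof.
split; first by exists [::]; rewrite big_nil.
move=> c x y [s [hs ->]] [t [ht ->]].
exists (map (fun p => (p.1, c *: p.2)) s ++ t); split.
  apply: allP_cat => //; apply: allP_map; apply: allP_impl hs => p [Rp [Cp Hp]].
  by split => //; split => //; apply: (subZ (LR_sub p.1)).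
by rewrite big_cat big_map scaler_sumr.
Qed.
Lemma V_gen a b v : isr b -> conn a b -> LR b v -> VLa a v.
Proof. by move=> *; exists [:: (b, v)]; split; rewrite ?big_cons ?big_nil ?addr0. Qed.
Lemma H_sub' a : subspace (HLa a). Proof. exact: span_sub. Qed.
Lemma L_sub a : subspace (LLa a).
Proof.
split; first by exists 0, 0; split; [apply: sub0; apply: span_sub|split;[apply: sub0; apply: V_sub|rewrite addr0]].
move=> c x y [h [v [Hh [Hv ->]]]] [h' [v' [Hh' [Hv' ->]]]].
exists (c *: h + h'), (c *: v + v'); split; first by case: (H_sub' a) => _; apply.
split; first by case: (V_sub a) => _; apply.
by rewrite scalerDr addrACA.
Qed.
Lemma HL a x : HLa a x -> LLa a x.
Proof. by move=> Hx; exists x, 0; split => //; split; [apply: sub0; apply: V_sub|rewrite addr0]. Qed.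
Lemma VL a x : VLa a x -> LLa a x.
Proof. by move=> Hx; exists 0, x; split; [apply: sub0; apply: span_sub|split => //; rewrite add0r]. Qed.
Lemma HLa_H a x : HLa a x -> H x.
Proof.
move=> Hx; apply: (span_ind Hx H_sub) => t [b [u [v [Rb [Cb [Hu [Hv ->]]]]]]].
apply: L0_H; apply: (LR_eq (LR_br Hu Hv)) => h _.
by rewrite /sumphi /oppf subrr.
Qed.
Lemma HLa_gen a b u v : isr b -> conn a b -> LR b u -> LR (oppf b) v -> HLa a (br u v).
Proof. by move=> Rb Cb Hu Hv; apply: span_gen; exists b, u, v. Qed.

Lemma LLa_brH a x y : LLa a x -> H y -> LLa a (br x y).
Proof.
move=> [h [v [Hh [[s [hs ->]] ->]]]] Hy; rewrite brDl (H_ab (HLa_H Hh) Hy) add0r.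
apply: VL; rewrite br_suml; apply: (sub_sum (V_sub a)); apply: allP_impl hs.
move=> p [Rp [Cp Hp]]; apply: (V_gen (b := shift p.1)).
- exact: isr_shift.
- exact: conn_shift.
apply: (LR_eq (LR_br Hp (LR_H Hy))) => h0 _.
by rewrite /sumphi /aphim /= addr0.
Qed.

Lemma LLa_rr a b c v w : conn a b -> isr b -> LR b v -> isr c -> LR c w -> LLa a (br v w).
Proof.
move=> Cb Rb Hv Rc Hw.
case: (classic (eqH (sumphi b c) Dflt)) => E.
  apply: HL; apply: (HLa_gen Rb Cb Hv); apply: (LR_eq Hw) => h Hh.
  have := E _ (H0_phi Hh); rewrite /sumphi /dflt !phiK /oppf => /eqP.
  by rewrite addrC addr_eq0 => /eqP.
case: (classic (br v w = 0)) => [->|nz]; first by apply: sub0; apply: L_sub.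
have Rd : isr (sumphi b c).
  apply: (isr_vec (v := br v w)) => //; last exact: LR_br.
  by apply: lin_sumphi; apply: isr_lin.
apply: VL; apply: (V_gen Rd); last exact: LR_br.
exact: conn_ext.
Qed.

Lemma triple_hom a b gm g g' k u v w : conn a b -> isr b -> isr gm ->
  Lg g u -> Lg g' v -> Lg k w -> LR b u -> LR (oppf b) v -> LR gm w ->
  VLa a (br (br u v) w).
Proof.
move=> Cb Rb Rg Gu Gv Gw Hu Hv Hw.
case: (classic (br (br u v) w = 0)) => [->|nz]; first by apply: sub0; apply: V_sub.
apply: (V_gen (b := shift gm)); first exact: isr_shift; last first.
  apply: (LR_eq (LR_br (LR_br Hu Hv) Hw)) => h _.
  by rewrite /sumphi /oppf /aphim /= subrr add0r.
have Gw' : Lg k (pinv w) := Lg_pinv Gw.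
have Hw' : LR (bphi gm) (pinv w) := LR_pinv Hw.
have J := jac Gw' Gu Gv; rewrite pinvK in J.
have [nz1|nz2] : br v (pinv w) <> 0 \/ br (pinv w) u <> 0.
- apply: NNPP => C; apply: nz.
  have [E1 E2] : br v (pinv w) = 0 /\ br (pinv w) u = 0.
    by split; apply: NNPP => D; apply: C; [left|right].
  rewrite E1 E2 !br0r !scaler0 !addr0 in J.
  move/eqP: J; rewrite scaler_eq0 (negbTE (eps_nz _ _)) /= => /eqP J.
  by rewrite (skew (br_deg Gu Gv) Gw) J scaler0 oppr0.
-
  have Hm := LR_br Hv Hw'.
  have Rmb : isr (oppf b) := isr_opp Rb.
  case: (classic (eqH (sumphi (oppf b) (bphi gm)) Dflt)) => E.
    apply: (conn_eqH (b := shift (shift b))); first by do 2! apply: conn_shift.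
    move=> h Hh; have := E _ (H0_pinv Hh).
    rewrite /sumphi /oppf /bphi /dflt pinvK /aphim /= => /eqP.
    by rewrite addrC subr_eq0 => /eqP.
  have Rm : isr (sumphi (oppf b) (bphi gm)).
    apply: (isr_vec (v := br v (pinv w))) => //.
    by apply: lin_sumphi; apply: isr_lin => //; apply: isr_bphi.
  have Cm := conn_ext (conn_opp Cb) Rmb (isr_bphi Rg) Rm.
  have Rs : isr (sumphi (sumphi (oppf b) (bphi gm)) (shift b)).
    apply: (isr_eq (isr_shift Rg)) => h _.
    by rewrite /sumphi /oppf /bphi /aphim /= pinvK addrAC addNr add0r.
  apply: (conn_eqH (conn_ext Cm Rm (isr_shift Rb) Rs)) => h _.
  by rewrite /sumphi /oppf /bphi /aphim /= pinvK addrAC addNr add0r.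
-
  have Hd := LR_br Hw' Hu.
  case: (classic (eqH (sumphi (bphi gm) b) Dflt)) => E.
    apply: (conn_eqH (b := oppf (shift (shift b)))).
      by apply: conn_opp; do 2! apply: conn_shift.
    move=> h Hh; have := E _ (H0_pinv Hh).
    rewrite /sumphi /oppf /bphi /dflt pinvK /aphim /= => /eqP.
    by rewrite addr_eq0 => /eqP ->.
  have Rd : isr (sumphi b (bphi gm)).
    apply: (isr_vec (v := br (pinv w) u)) => //.
    - by apply: lin_sumphi; apply: isr_lin => //; apply: isr_bphi.
    - by move=> E'; apply: E => h Hh; rewrite -(E' h Hh) /sumphi addrC.
    - by apply: (LR_eq Hd) => h _; rewrite /sumphi addrC.
  have Cd := conn_ext Cb Rb (isr_bphi Rg) Rd.
  have Rs : isr (sumphi (sumphi b (bphi gm)) (oppf (shift b))).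
    apply: (isr_eq (isr_shift Rg)) => h _.
    by rewrite /sumphi /oppf /bphi /aphim /= pinvK addrAC subrr add0r.
  apply: (conn_eqH (conn_ext Cd Rd (isr_opp (isr_shift Rb)) Rs)) => h _.
  by rewrite /sumphi /oppf /bphi /aphim /= pinvK addrAC subrr add0r.
Qed.

Lemma triple a b gm u v w : conn a b -> isr b -> isr gm ->
  LR b u -> LR (oppf b) v -> LR gm w -> VLa a (br (br u v) w).
Proof.
move=> Cb Rb Rg Hu Hv Hw; move: w Hw.
pose P t := forall w, LR gm w -> VLa a (br t w).
have sP : subspace P.
  split; first by move=> w _; rewrite br0l; apply: sub0; apply: V_sub.
  move=> c x y Px Py w Hw; rewrite brDZl.
  by case: (V_sub a) => _; apply; [apply: Px|apply: Py].
apply: (br_ext sP _ Hu Hv) => x y g g' Gx Gy Hx Hy.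
apply: br_extR; first exact: V_sub.
move=> w k Gw Hw; exact: (triple_hom Cb Rb Rg Gx Gy Gw Hx Hy Hw).
Qed.

Lemma LLa_brroot a x gm w : LLa a x -> isr gm -> LR gm w -> LLa a (br x w).
Proof.
move=> [h [v [Hh [[s [hs ->]] ->]]]] Rg Hw; rewrite brDl.
apply: (subD (L_sub a)).
  apply: VL; apply: (span_ind (Q := fun t => VLa a (br t w)) Hh).
    split; first by rewrite br0l; apply: sub0; apply: V_sub.
    move=> c x1 y1 Px Py; rewrite brDZl.
    by case: (V_sub a) => _; apply.
  move=> t [b [u [v1 [Rb [Cb [Hu [Hv ->]]]]]]]; exact: (triple Cb Rb Rg Hu Hv Hw).
rewrite br_suml; apply: (sub_sum (L_sub a)); apply: allP_impl hs.
move=> p [Rp [Cp Hp]]; exact: LLa_rr Cp Rp Hp Rg Hw.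
Qed.

Lemma LLa_br a x y : LLa a x -> LLa a (br x y).
Proof.
move=> Hx; have [h [s [Hh [hs ->]]]] := spl y.
rewrite brDr; apply: (subD (L_sub a)); first exact: LLa_brH.
rewrite br_sumr; apply: (sub_sum (L_sub a)); apply: allP_impl hs.
by move=> p [Rp Hp]; apply: LLa_brroot Rp Hp.
Qed.

Lemma LLa_graded a : graded_sub Lg (LLa a).
Proof.
split; first exact: L_sub.
move=> x Hx.
pose Q t := exists s : seq (G * L),
  allP (fun p => Lg p.1 p.2 /\ LLa a p.2) s /\ t = \sum_(p <- s) p.2.
have sQ : subspace Q.
  split; first by exists [::]; rewrite big_nil.
  move=> c x1 y1 [s [hs ->]] [t [ht ->]].
  exists (map (fun p => (p.1, c *: p.2)) s ++ t); split.
    apply: allP_cat => //; apply: allP_map; apply: allP_impl hs => p [Gp Lp].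
    by split; [apply: LgZ|apply: (subZ (L_sub a))].
  by rewrite big_cat big_map scaler_sumr.
have Qx : Q x.
  case: Hx => [h [v [Hh [[s [hs ->]] ->]]]].
  apply: (subD sQ).
    apply: (span_ind Hh sQ) => t [b [u [v1 [Rb [Cb [Hu [Hv ->]]]]]]].
    apply: (br_ext sQ _ Hu Hv) => x1 y1 g g' Gx Gy Hx1 Hy1.
    exists [:: (g + g', br x1 y1)]; split; last by rewrite big_cons big_nil addr0.
    split => //; split; first exact: br_deg.
    by apply: HL; apply: (HLa_gen Rb Cb Hx1 Hy1).
  apply: (sub_sum sQ); apply: allP_impl hs => p [Rp [Cp Hp]].
  have [t [ht ->]] := root_graded Hp.
  exists t; split => //; apply: allP_impl ht => q [Gq Hq]; split => //.
  by apply: VL; apply: V_gen Hq.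
case: Qx => s [hs ->].
have PD : forall g x1 y1, Lg g x1 /\ LLa a x1 -> Lg g y1 /\ LLa a y1 ->
    Lg g (x1 + y1) /\ LLa a (x1 + y1).
  move=> g x1 y1 [G1 L1] [G2 L2]; split; first exact: LgD.
  exact: (subD (L_sub a)).
have [s' [u' [a' e']]] := merge (P := fun g x => Lg g x /\ LLa a x) PD hs.
by exists s'; split => //; split => //; rewrite e'.
Qed.

Lemma LLa_map (f : L -> L) (F : (L -> K) -> (L -> K)) a :
  (forall c x y, f (c *: x + y) = c *: f x + f y) ->
  (forall u v, f (br u v) = br (f u) (f v)) ->
  (forall b v, LR b v -> LR (F b) (f v)) ->
  (forall b, isr b -> isr (F b)) ->
  (forall b, conn a b -> conn a (F b)) ->
  (forall b, eqH (F (oppf b)) (oppf (F b))) ->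
  forall x, LLa a x -> LLa a (f x).
Proof.
move=> fl fb fL fR fC fO.
have f0 : f 0 = 0.
  by have := fl (-1) 0 0; rewrite scaler0 addr0 scaleN1r addNr.
have fD : forall x y, f (x + y) = f x + f y.
  by move=> x y; have := fl 1 x y; rewrite !scale1r.
have fs : forall (s : seq ((L -> K) * L)), f (\sum_(p <- s) p.2) = \sum_(p <- s) f p.2.
  elim => [|p s IH]; first by rewrite !big_nil.
  by rewrite !big_cons fD IH.
move=> x [h [v [Hh [[s [hs ->]] ->]]]]; rewrite fD.
exists (f h), (f (\sum_(p <- s) p.2)); split.
  apply: (span_ind (Q := fun t => HLa a (f t)) Hh).
    split; first by rewrite f0; apply: sub0; apply: H_sub'.
    by move=> c x1 y1 P1 P2; rewrite fl; case: (H_sub' a) => _; apply.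
  move=> t [b [u [v1 [Rb [Cb [Hu [Hv ->]]]]]]]; rewrite fb.
  exact: (HLa_gen (fR _ Rb) (fC _ Cb) (fL _ _ Hu) (LR_eq (fL _ _ Hv) (fO b))).
split => //; rewrite fs.
exists (map (fun p => (F p.1, f p.2)) s); split; last by rewrite big_map.
apply: allP_map; apply: allP_impl hs => p [Rp [Cp Hp]].
by split; [apply: fR|split; [apply: fC|apply: fL]].
Qed.


Lemma LLa_ideal a : ideal Lg br phi (LLa a).
Proof.
split; first exact: LLa_graded.
split; first by move=> x y; apply: LLa_br.
split.
  apply: (LLa_map (F := fun b => shift b)).
  - exact: phiDZ.
  - exact: phi_br.
  - by move=> b v; apply: LR_phi.
  - exact: isr_shift.
  - exact: conn_shift.
  - by move=> b h _.
move=> y Hy; exists (pinv y); split; last exact: pinvK.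
apply: (LLa_map (F := bphi)) => //.
- exact: pinvDZ.
- exact: pinv_br.
- by move=> b v; apply: LR_pinv.
- exact: isr_bphi.
- exact: conn_bphi.
Qed.

Lemma part2 : simple Lg br phi ->
  (forall a b, isr a -> isr b -> conn a b) /\
  (forall x, H x <-> H_all Lg br phi H x).
Proof.
move=> [[x0 [y0 nz0]] Hsim].
have full : forall a, isr a -> forall x, LLa a x.
  move=> a Ra; case: (Hsim _ (LLa_ideal a)) => [Z|//].
  case: (Ra) => [_ [_ [v [nv Hv]]]].
  have := Z v (VL (V_gen Ra (conn_refl Ra) Hv)) => E.
  by rewrite E eqxx in nv.
have [a0 Ra0] : exists a, isr a.
  apply: NNPP => C; move/eqP: nz0; apply.
  have allH : forall x, H x.
    move=> x; have [h [s [Hh [hs ->]]]] := spl x.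
    case: s hs => [|p s] /=; first by rewrite big_nil addr0.
    by case=> [[Rp _] _]; case: C; exists p.1.
  by apply: H_ab.
split.
  move=> a b Ra Rb; case: (Rb) => [_ [_ [v [nv Hv]]]].
  have [h [w [Hh [[s [hs Ew]] Ev]]]] := full a Ra v.
  apply: NNPP => C; move/eqP: nv; apply.
  apply: oppr_inj; rewrite oppr0.
  apply: (@sep (size ((Dflt, h) :: s)) ((Dflt, h) :: s) b) => //.
  - exact: (subN (LR_sub b)).
  - split; first by split; [apply: LR_H; apply: HLa_H Hh|apply: root_ndflt'].
    apply: allP_impl hs => p [Rp [Cp Hp]]; split => // E.
    by apply: C; apply: (conn_eqH Cp) => h0 Hh0; rewrite E.
  by rewrite big_cons /= -Ew -Ev addNr.
move=> x; split.
  move=> Hx; have [h [v [Hh [[s [hs Ev]] Ex]]]] := full a0 Ra0 x.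
  have : x - h = 0.
    apply: (HV0 (s := s)).
    - by apply: (subB H_sub) => //; apply: HLa_H Hh.
    - by apply: allP_impl hs => p [Rp [_ Hp]].
    by rewrite Ex addrAC subrr add0r.
  move/subr0_eq => ->; apply: (span_mono _ Hh).
  by move=> t [b [u [v1 [Rb [_ [Hu [Hv ->]]]]]]]; exists b, u, v1.
move=> Hx; apply: (span_ind Hx H_sub) => t [b [u [v [Rb [Hu [Hv ->]]]]]].
apply: L0_H; apply: (LR_eq (LR_br Hu Hv)) => h _.
by rewrite /sumphi /oppf subrr.
Qed.

Lemma main_sec :
  (forall a, isr a -> ideal Lg br phi (LLa a)) /\
  (simple Lg br phi ->
     (forall a b, isr a -> isr b -> conn a b) /\
     (forall x, H x <-> H_all Lg br phi H x)).
Proof. by split; [move=> a _; apply: LLa_ideal|exact: part2]. Qed.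

End Main.

Theorem mainTheorem9 (K : fieldType) (G : zmodType) (L : lmodType K)
    (Lg : G -> L -> Prop) (br : L -> L -> L) (phi : L -> L) (eps : G -> G -> K)
    (H : L -> Prop) :
  hom_lie_color Lg br phi eps ->
  regular phi ->
  max_abelian_graded_subalgebra Lg br phi H ->
  is_split Lg br phi H ->
  symmetric_roots Lg br phi H ->
  (forall a, is_root Lg br phi H a -> ideal Lg br phi (L_La Lg br phi H a)) /\
  (simple Lg br phi ->
     (forall a b, is_root Lg br phi H a -> is_root Lg br phi H b ->
        connected Lg br phi H a b) /\
     (forall x, H x <-> H_all Lg br phi H x)).
Proof. move=> hl reg mag spl sym; exact: (main_sec hl reg mag spl sym). Qed.
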